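(* Let $q$ be a prime power, and let $d$ and $k$ be positive divisors of $q-1$ such that $d\nmid k$. Then there are at most $d$ elements $a\in\mathbb F_q^*$ for which the polynomial $x^{k+1}+ax$ maps all elements of $\mu_d$ into the same coset of $\mathbb F_q^*$ modulo $\mu_d$.
   Context: $\mathbb F_q$ is the field with $q$ elements, $\mathbb F_q^*$ its multiplicative group. For a divisor $d$ of $q-1$, $\mu_d$ denotes the group of $d$-th roots of unity in $\mathbb F_q^*$. *)

(* Defs.v *)
From HB Require Import structures.
From mathcomp Require Import all_boot all_order all_algebra all_field.
Set Implicit Arguments. Unset Strict Implicit. Unset Printing Implicit Defensive.
Import GRing.Theory.
Local Open Scope ring_scope.

Definition mu (F : finFieldType) (d : nat) : {set F} :=
  [set x : F | x ^+ d == 1].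

Definition mu_coset (F : finFieldType) (d : nat) (c : F) : {set F} :=
  [set c * z | z in mu F d].

Definition maps_into_one_coset (F : finFieldType) (d k : nat) (a : F) : bool :=
  [exists c : F, (c != 0) &&
     [forall x in mu F d, x ^+ k.+1 + a * x \in mu_coset d c]].

(* Main.v *)
Require Import Defs.
From mathcomp Require Import all_boot all_order all_algebra all_field.
From mathcomp Require Import all_fingroup all_solvable.
Local Open Scope ring_scope.
Import GRing.Theory.

Lemma exists_w (F : finFieldType) (d k : nat) (hd : (0 < d)%N)
  (hdq : (d %| #|F|.-1)%N) (hndk : ~~ (d %| k)%N) :
  exists w : F, w ^+ d = 1 /\ w ^+ k != 1.
Proof.
have /cyclicP [g hg] := field_unit_group_cyclic [set: {unit F}]%G.
have og : #[g]%g = #|F|.-1 by rewrite /order -hg card_finField_unit.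
have qpos : (0 < #|F|.-1)%N by rewrite -og order_gt0.
set m := (#|F|.-1 %/ d)%N.
have hm : (#|F|.-1 = m * d)%N by rewrite divnK.
have mpos : (0 < m)%N by move: qpos; rewrite hm muln_gt0 => /andP[].
exists (FinRing.uval (g ^+ m)%g); split.
  rewrite -FinRing.val_unitX -expgM -hm -og expg_order.
  by [].
apply/negP => /eqP H.
have H1 : ((g ^+ (m * k))%g = 1%g).
  apply: val_inj; rewrite /= expgM FinRing.val_unitX H.
  by [].

move/eqP: H1; rewrite -order_dvdn og hm dvdn_pmul2l //.
by rewrite (negbTE hndk).
Qed.

Theorem proposition4p6 (F : finFieldType) (d k : nat)
  (hd : (0 < d)%N) (hk : (0 < k)%N)
  (hdq : (d %| #|F|.-1)%N) (hkq : (k %| #|F|.-1)%N) (hndk : ~~ (d %| k)%N) :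
  (#|[set a : F | (a != 0%R) && maps_into_one_coset d k a]| <= d)%N.
Proof.
have [w [w1 wk]] := @exists_w F d k hd hdq hndk.
set z := w ^+ k.
set S := [set a : F | _].
pose P : {poly F} := ('X - (-1)%:P) ^+ d - ('X - (- z)%:P) ^+ d.
have Psz : (size P <= d.+1)%N.
  apply: leq_trans (size_polyD _ _) _.
  by rewrite size_polyN !size_exp_XsubC maxnn.
have P0 : P != 0.
  apply/negP => /eqP HP.
  have : P.[-1] = 0 by rewrite HP horner0.
  rewrite /P !hornerE subrr expr0n eqn0Ngt hd /= sub0r opprK.
  move/eqP; rewrite oppr_eq0 expf_eq0 hd /= addrC subr_eq0.
  by move/eqP => E; move: wk; rewrite -/z E eqxx.
have rootS : forall a, a \in S -> root P a.
  move=> a; rewrite inE => /andP [_ /existsP [c /andP [c0 /forallP Hc]]].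
  have key : forall x, x ^+ d = 1 -> (x ^+ k + a) ^+ d = c ^+ d.
    move=> x x1.
    have : x \in mu F d by rewrite inE x1.
    move/(implyP (Hc x)) => /imsetP [y]; rewrite inE => /eqP y1 E.
    have := congr1 (fun t => t ^+ d) E.
    by rewrite /= exprMn y1 mulr1 exprSr -mulrDl exprMn x1 mulr1.
  have K1 := key 1 (expr1n _ _).
  have Kw := key w w1.
  rewrite expr1n in K1.
  apply/eqP; rewrite /P !hornerE opprK -/z.
  by rewrite opprK [a + 1]addrC K1 [a + z]addrC Kw subrr.
have := max_poly_roots P0 (rs := enum S) _ _.
rewrite -cardE => H.
have : (#|S| < size P)%N.
  apply: H; last exact: enum_uniq.
  by apply/allP => a; rewrite mem_enum; apply: rootS.
move=> H2; by rewrite -ltnS (leq_trans H2 Psz).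
Qed.
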